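(* Let $\gamma_0=\frac{\log(3/2)}{\log2}-\frac12$. For every sufficiently small $\varepsilon>0$, every positive integer $L$ and every $Y\ge1$, \[ \sum_{\substack{\ell\mid L^\infty\\ \ell>Y}}\frac{\ell^{1+\varepsilon}}{\nu(\ell)^2}\Big(\sum_{d\mid\ell}c_\ell(d)\Big)^2\ll_\varepsilon Y^{-2\gamma_0+2\varepsilon}\tau(L). \]
   Context: $\nu$ is the completely multiplicative function with $\nu(p)=p+1$; $\tau$ is the divisor function; $\ell\mid L^\infty$ means every prime factor of $\ell$ divides $L$. The Chebyshev coefficients $c_{j,n}$ are defined by $x^n=\sum_{j=0}^n c_{j,n}U_j(x/2)$, with $U_j$ the Chebyshev polynomials of the second kind; for $d\mid\ell$, $c_\ell(d)=\prod_{p\mid\ell}c_{j_p,n_p}$ where $p^{j_p}\|d$, $p^{n_p}\|\ell$. *)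

(* Defs.v *)
From mathcomp Require Import all_boot.
From Stdlib Require Import Reals ClassicalEpsilon.

Set Implicit Arguments. Unset Strict Implicit. Unset Printing Implicit Defensive.

Definition nu (l : nat) : nat :=
  (\prod_(p <- primes l) (p.+1) ^ (logn p l))%N.

Definition tau (n : nat) : nat := size (divisors n).

Definition divides_pow_inf (l L : nat) : bool :=
  (0 < l)%N && all (fun p => p %| L) (primes l).

Open Scope R_scope.

(* (U_j(x), U_{j+1}(x)) with U_0 = 1, U_1 = 2x, U_{j+2} = 2x U_{j+1} - U_j *)
Fixpoint chebU_pair (j : nat) (x : R) : R * R :=
  match j with
  | O => (1, 2 * x)
  | S k => let (a, b) := chebU_pair k x in (b, 2 * x * b - a)
  end.

Definition chebU (j : nat) (x : R) : R := fst (chebU_pair j x).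

Definition cheb_coeffs (n : nat) : nat -> R :=
  epsilon (inhabits (fun _ : nat => 0))
    (fun c : nat -> R =>
       forall x : R, x ^ n = sum_f_R0 (fun j => c j * chebU j (x / 2)) n).

Definition cjn (j n : nat) : R := cheb_coeffs n j.

Definition c_ell (l d : nat) : R :=
  \big[Rmult/1]_(p <- primes l) cjn (logn p d) (logn p l).

Definition sum_c_ell (l : nat) : R :=
  \big[Rplus/0]_(d <- divisors l) c_ell l d.

Definition term (eps : R) (l : nat) : R :=
  Rpower (INR l) (1 + eps) / (INR (nu l)) ^ 2 * (sum_c_ell l) ^ 2.

Definition partial_sum (eps : R) (L : nat) (Y : R) (N : nat) : R :=
  sum_f_R0 (fun l => if divides_pow_inf l L
                     then (if Rlt_dec Y (INR l) then term eps l else 0)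
                     else 0) N.

Definition gamma0 : R := ln (3 / 2) / ln 2 - 1 / 2.

(* Main.v *)
Require Import Defs.
From Stdlib Require Import Reals ClassicalEpsilon Lra.
From mathcomp Require Import all_boot all_order all_algebra.
From mathcomp Require Import Rstruct zify.
Import Order.TTheory GRing.Theory Num.Theory.


Local Open Scope ring_scope.

Fixpoint dd (n j : nat) : nat :=
  match n with
  | O => (j == 0)%N
  | n'.+1 => ((if j is j'.+1 then dd n' j' else 0) + dd n' j.+1)%N
  end.

Lemma dd_gt n j : (n < j)%N -> dd n j = 0%N.
Proof.
elim: n j => [|n IH] [|j] //= hj.
by rewrite !IH //; lia.
Qed.

Lemma dd_sum n K : (\sum_(j < K) dd n j <= 2 ^ n)%N.
Proof.
elim: n K => [|n IH] K.
  case: K => [|K]; first by rewrite big_ord0.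
  rewrite big_ord_recl /= big1 // => i _.
rewrite /= big_split /= expnS mul2n -addnn leq_add //.
  case: K => [|K]; first by rewrite big_ord0.
  by rewrite big_ord_recl /= add0n; exact: IH K.
apply: leq_trans (IH K.+1); rewrite [X in (_ <= X)%N]big_ord_recl leq_addl //.
Qed.

Fixpoint Upair (j : nat) : {poly R} * {poly R} :=
  match j with
  | O => (1, 'X)
  | S k => let (a, b) := Upair k in (b, 'X * b - a)
  end.
Definition Up j := (Upair j).1.

Lemma Up0 : Up 0 = 1. Proof. by []. Qed.
Lemma Up1 : Up 1 = 'X. Proof. by []. Qed.
Lemma UpSS j : Up j.+2 = 'X * Up j.+1 - Up j.
Proof. by rewrite /Up /=; case: (Upair j). Qed.

Open Scope R_scope.
Lemma chebU1 x : chebU 1 x = 2 * x. Proof. by []. Qed.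
Lemma chebUSS j x : chebU j.+2 x = 2 * x * chebU j.+1 x - chebU j x.
Proof. by rewrite /chebU /=; case: (chebU_pair j x). Qed.

Lemma Up_eval j x : horner (Up j) x = chebU j (x / 2).
Proof.
have H2 : 2 * (x / 2) = x by field.
elim: j {-2}j (leqnn j) => [|m IH] j hj.
  by case: j hj => // _; rewrite Up0 hornerC.
case: j hj => [|[|j]] hj.
- by rewrite Up0 hornerC.
- by rewrite Up1 hornerX chebU1 H2.
- rewrite UpSS chebUSS hornerD hornerN hornerM hornerX !IH //; try lia.
  by rewrite H2.
Qed.
Open Scope ring_scope.

Lemma Up_size j : (size (Up j) <= j.+1)%N /\ (Up j)`_j = 1.
Proof.
elim: j {-2}j (leqnn j) => [|m IH] j hj.
  by case: j hj => // _; rewrite Up0 size_poly1 coefC.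
case: j hj => [|[|j]] hj.
- by rewrite Up0 size_poly1 coefC.
- by rewrite Up1 size_polyX coefX.
- have [s1 c1] := IH j.+1 ltac:(lia).
  have [s0 c0] := IH j ltac:(lia).
  split.
    rewrite UpSS; apply: leq_trans (size_polyD _ _) _.
    rewrite size_polyN geq_max; apply/andP; split; last by rewrite ltnW // ltnW.
    have [->|nz] := eqVneq (Up j.+1) 0; first by rewrite mulr0 size_poly0.
    by rewrite mulrC size_mulX.
  rewrite UpSS coefB coefXM /= c1.
  have -> : (Up j)`_j.+2 = 0 by apply: nth_default; apply: leq_trans s0 _; rewrite ltnW.
  by rewrite subr0.
Qed.

Definition Upm j := if j is j'.+1 then Up j' else 0.

Lemma XUp j : 'X * Up j = Up j.+1 + Upm j.
Proof.
case: j => [|j] /=; first by rewrite Up0 Up1 mulr1 addr0.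
by rewrite UpSS subrK.
Qed.

Lemma Xn_Up n m : (n <= m)%N ->
  'X^n = \sum_(0 <= j < m.+1) (dd n j)%:R *: Up j.
Proof.
elim: n m => [|n IH] m hnm.
  by rewrite big_nat_recl //= scale1r Up0 big1 ?addr0 // => i _; rewrite scale0r.
move: hnm; case: m => [|m] // hnm.
rewrite exprS (IH m.+1); last lia.
rewrite mulr_sumr.
under eq_bigr do rewrite -scalerAr XUp scalerDr.
rewrite big_split /=.
under [in RHS]eq_bigr do rewrite /= natrD scalerDl.
rewrite big_split /=; congr (_ + _).
  rewrite [in RHS]big_nat_recl // /= scale0r add0r.
  rewrite [in LHS]big_nat_recr //= dd_gt ?scale0r ?addr0 //.
rewrite [in LHS]big_nat_recl //= scaler0 add0r.
rewrite [in RHS]big_nat_recr //= dd_gt ?scale0r ?addr0 //; lia.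
Qed.

Lemma poly_all0 (p : {poly R}) : (forall x, p.[x] = 0) -> p = 0.
Proof.
move=> H; apply/eqP; apply/negPn/negP => nz.
pose rs := [seq (i%:R : R) | i <- iota 0 (size p)].
have H1 : all (root p) rs by apply/allP => y /mapP [i _ ->]; rewrite /root H.
have H2 : uniq_roots rs.
  rewrite uniq_rootsE map_inj_uniq ?iota_uniq //.
  by move=> a b /eqP; rewrite eqr_nat => /eqP.
have := max_ring_poly_roots nz H1 H2.
by rewrite size_map size_iota ltnn.
Qed.

Lemma Up_uniq n (a : nat -> R) :
  (forall x, \sum_(0 <= j < n.+1) a j * (Up j).[x] = 0) ->
  forall j, (j <= n)%N -> a j = 0.
Proof.
elim: n a => [|n IH] a H j hj.
  have := H 0; rewrite big_nat1 Up0 hornerC mulr1.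
  by case: j hj.
set P := \sum_(0 <= j < n.+2) a j *: Up j.
have P0 : P = 0.
  apply: poly_all0 => x; rewrite /P horner_sum -[RHS](H x).
  by apply: eq_bigr => i _; rewrite hornerZ.
have an : a n.+1 = 0.
  have := congr1 (fun q : {poly R} => q`_n.+1) P0.
  rewrite /P coef_sum big_nat_recr //= coef0 coefZ (proj2 (Up_size _)) mulr1.
  rewrite big1_seq ?add0r // => i; rewrite mem_index_iota => /andP [_ hi].
  rewrite coefZ nth_default ?mulr0 //.
  apply: leq_trans (proj1 (Up_size i)) _; lia.
have [->|hjn] := eqVneq j n.+1; first by [].
move/eqP: hjn => hjn.
apply: (IH a _ j); last lia.
move=> x.
by rewrite -[RHS](H x) [in RHS]big_nat_recr //= an mul0r addr0.
Qed.

Open Scope R_scope.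
Lemma cheb_exists n : exists c : nat -> R,
  forall x : R, x ^ n = sum_f_R0 (fun j => c j * chebU j (x / 2)) n.
Proof.
exists (fun j => INR (dd n j)) => x.
rewrite sum_f_R0E RpowE.
have := congr1 (fun p => horner p x) (@Xn_Up n n (leqnn n)).
rewrite hornerXn horner_sum => ->.
by apply: eq_bigr => i _; rewrite hornerZ Up_eval INRE.
Qed.

Lemma cheb_spec n : forall x : R,
  x ^ n = sum_f_R0 (fun j => cheb_coeffs n j * chebU j (x / 2)) n.
Proof. exact: (epsilon_spec _ _ (cheb_exists n)). Qed.

Lemma cjn_eq n j : (j <= n)%N -> cjn j n = INR (dd n j).
Proof.
move=> hj; rewrite INRE.
have := @Up_uniq n (fun j => (cheb_coeffs n j - (dd n j)%:R)%R) _ j hj.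
rewrite /cjn => H; apply/eqP; rewrite -subr_eq0; apply/eqP; apply: H => x.
have h1 := cheb_spec n x; have [c hc] := cheb_exists n.
have h2 := congr1 (fun p => horner p x) (@Xn_Up n n (leqnn n)).
rewrite /= hornerXn horner_sum in h2.
rewrite sum_f_R0E RpowE in h1.
under eq_bigr do rewrite mulrBl.
rewrite sumrB (_ : \sum_(0 <= i < n.+1) cheb_coeffs n i * (Up i).[x] = x ^+ n).
  rewrite (_ : \sum_(0 <= i < n.+1) (dd n i)%:R * (Up i).[x] = x ^+ n) ?subrr //.
  by rewrite h2; apply: eq_bigr => i _; rewrite hornerZ.
by rewrite h1; apply: eq_bigr => i _; rewrite Up_eval.
Qed.
Open Scope ring_scope.

Local Open Scope ring_scope.

Lemma prod_nth (P : seq nat) (F : nat -> R) :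
  \prod_(p <- P) F p = \prod_(i < size P) F (nth 0%N P i).
Proof. by rewrite (big_nth 0%N) big_mkord. Qed.

Lemma inj_bound (P S : seq nat) (K : nat) (g : nat -> nat -> R) :
  uniq S ->
  (forall s, s \in S -> [/\ (0 < s)%N, {subset primes s <= P} & forall p, (logn p s <= K)%N]) ->
  (forall p e, 0 <= g p e) ->
  \sum_(s <- S) \prod_(p <- P) g p (logn p s) <= \prod_(p <- P) \sum_(e < K.+1) g p e.
Proof.
move=> uS hS g0.
rewrite prod_nth bigA_distr_bigA /=.
under eq_bigr do rewrite prod_nth.
set r := size P.
pose phi (s : nat) : {ffun 'I_r -> 'I_K.+1} := [ffun i : 'I_r => inord (logn (nth 0%N P i) s)].
pose H (f : {ffun 'I_r -> 'I_K.+1}) := \prod_(i < r) g (nth 0%N P i) (f i).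
rewrite (eq_big_seq (fun s => H (phi s))); last first.
  move=> s /hS [_ _ hK]; rewrite /H; apply: eq_bigr => i _.
  by rewrite ffunE inordK // ltnS.
rewrite -(big_map phi xpredT H) big_uniq; last first.
  rewrite map_inj_in_uniq // => s t /hS [s0 sP sK] /hS [t0 tP tK] eqst.
  apply: eqn_from_log => // q.
  have [qP|qP] := boolP (q \in P).
    have hi : (index q P < r)%N by rewrite index_mem.
    have := congr1 (fun f : {ffun 'I_r -> 'I_K.+1} => val (f (Ordinal hi))) eqst.
    by rewrite /phi !ffunE /= nth_index // !inordK // ltnS.
  have l0 u : {subset primes u <= P} -> logn q u = 0%N.
    move=> uP; apply/eqP; rewrite -leqn0 leqNgt logn_gt0.
    by apply/negP => /uP; apply/negP.
  by rewrite !l0.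
rewrite [leLHS]big_mkcond /=; apply: ler_sum => f _.
case: ifP => _ //; apply: prodr_ge0 => i _; exact: g0.
Qed.

Local Open Scope ring_scope.

Lemma logn_le p n : (0 < n)%N -> (logn p n <= n)%N.
Proof.
move=> n0; case: (boolP (prime p)) => pp; last by rewrite lognE (negPf pp).
apply: leq_trans (ltnW (ltn_expl _ (prime_gt1 pp))) _.
exact: dvdn_leq n0 (pfactor_dvdnn _ _).
Qed.

Definition gg (l p e : nat) : R :=
  if (e <= logn p l)%N then (dd (logn p l) e)%:R else 0.

Lemma sum_c_ellE l : (0 < l)%N -> sum_c_ell l =
  \sum_(d <- divisors l) \prod_(p <- primes l) gg l p (logn p d).
Proof.
move=> l0; rewrite /sum_c_ell; apply: eq_big_seq => d hd; rewrite /c_ell.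
apply: eq_big_seq => p hp; rewrite /gg ifT; last first.
  by apply: dvdn_leq_log => //; rewrite dvdn_divisors.
by rewrite cjn_eq ?INRE // dvdn_leq_log // dvdn_divisors.
Qed.

Lemma sum_c_bound l : (0 < l)%N ->
  0 <= sum_c_ell l <= \prod_(p <- primes l) 2 ^+ logn p l.
Proof.
move=> l0; have gg0 p e : 0 <= gg l p e by rewrite /gg; case: ifP.
rewrite sum_c_ellE //; apply/andP; split.
  by apply: sumr_ge0 => d _; apply: prodr_ge0 => p _.
apply: le_trans (@inj_bound (primes l) (divisors l) l (gg l) _ _ gg0) _.
- exact: divisors_uniq.
- move=> d; rewrite -dvdn_divisors // => dl.
  have d0 : (0 < d)%N by apply: dvdn_gt0 dl.
  split => //.
    by move=> p; rewrite !mem_primes d0 l0 => /and3P [-> _ pd] /=; apply: dvdn_trans dl.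
  move=> p; apply: leq_trans (dvdn_leq_log _ _ dl) _ => //; exact: logn_le.
apply: ler_prod => p _; rewrite sumr_ge0 //=.
apply: le_trans (_ : \sum_(e < l.+1) ((dd (logn p l) e)%:R : R) <= _).
  by apply: ler_sum => e _; rewrite /gg; case: ifP.
by rewrite -natr_sum -natrX ler_nat dd_sum.
Qed.

Local Open Scope ring_scope.

Lemma nat_decomp l : (0 < l)%N -> l = (\prod_(p <- primes l) p ^ logn p l)%N.
Proof. by move=> l0; rewrite {1}(prod_prime_decomp l0) prime_decompE big_map. Qed.

Lemma INR_decomp l : (0 < l)%N ->
  (l%:R : R) = \prod_(p <- primes l) (p%:R) ^+ (logn p l).
Proof.
move=> l0; rewrite {1}(@nat_decomp l l0) natr_prod.
by apply: eq_bigr => p _; rewrite natrX.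
Qed.

Lemma NatpowE a b : Nat.pow a b = (a ^ b)%N.
Proof. by elim: b => //= b IH; rewrite expnS IH multE. Qed.

Lemma nu_decomp l : ((nu l)%:R : R) = \prod_(p <- primes l) ((p.+1)%:R) ^+ (logn p l).
Proof. by rewrite /nu natr_prod; apply: eq_bigr => p _; rewrite NatpowE natrX. Qed.

Lemma Rpower_gt0 x y : 0 < Rpower x y.
Proof. by apply/RltP; rewrite /Rpower; apply: exp_pos. Qed.

Lemma Rpower_1x y : Rpower 1 y = 1.
Proof. by rewrite /Rpower ln_1 Rmult_0_r exp_0. Qed.

Lemma RpowerM x y b : 0 < x -> 0 < y -> Rpower (x * y) b = Rpower x b * Rpower y b.
Proof.
move=> /RltP x0 /RltP y0.
by have := Rpower_mult_distr x y b x0 y0; rewrite RmultE => ->.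
Qed.

Lemma RpowerX x n b : 0 < x -> Rpower (x ^+ n) b = Rpower x b ^+ n.
Proof.
move=> x0; elim: n => [|n IH]; first by rewrite !expr0 Rpower_1x.
by rewrite !exprS RpowerM ?exprn_gt0 // IH.
Qed.

Lemma Rpower_prod (s : seq nat) (x : nat -> R) (e : nat -> nat) b :
  (forall p, p \in s -> 0 < x p) ->
  Rpower (\prod_(p <- s) x p ^+ e p) b = \prod_(p <- s) (Rpower (x p) b) ^+ e p.
Proof.
elim: s => [|q s IH] hx; first by rewrite !big_nil Rpower_1x.
have hq : 0 < x q by apply: hx; rewrite inE eqxx.
have hs p : p \in s -> 0 < x p by move=> ps; apply: hx; rewrite inE ps orbT.
rewrite !big_cons RpowerM; last 2 first.
- exact: exprn_gt0.
- by rewrite big_seq; apply: prodr_gt0 => p ps; apply: exprn_gt0; apply: hs.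
by rewrite RpowerX // IH.
Qed.

Local Open Scope ring_scope.

Definition rr (b : R) (p : nat) : R := Rpower p%:R b * 2 ^+ 2 / ((p.+1)%:R) ^+ 2.

Lemma rr_prod b l : (0 < l)%N ->
  \prod_(p <- primes l) rr b p ^+ logn p l =
  Rpower l%:R b / ((nu l)%:R) ^+ 2 * (\prod_(p <- primes l) (2 : R) ^+ logn p l) ^+ 2.
Proof.
move=> l0; rewrite {1}(@INR_decomp l l0) nu_decomp Rpower_prod; last first.
  by move=> p; rewrite mem_primes => /andP [pp _]; rewrite ltr0n prime_gt0.
rewrite /rr.
under eq_bigr do rewrite !exprMn exprVn -exprAC.
rewrite !big_split /= prodfV !prodrXl.
by rewrite -expr2 mulrAC.
Qed.

Lemma term_bound (eps s Y : R) (l : nat) : 0 <= s -> 1 <= Y -> (0 < l)%N -> Y < l%:R ->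
  term eps l <= Rpower Y (- s) * \prod_(p <- primes l) rr (1 + eps + s) p ^+ logn p l.
Proof.
move=> s0 Y1 l0 Yl.
have Y0 : 0 < Y by apply: lt_le_trans Y1; exact: ltr01.
have lpos : 0 < (l%:R : R) by rewrite ltr0n.
have [Sc0 Sc1] := andP (@sum_c_bound l l0).
set Pr := \prod_(p <- primes l) (2 : R) ^+ logn p l.
have nupos : 0 < ((nu l)%:R : R).
  rewrite nu_decomp big_seq; apply: prodr_gt0 => p _; exact: exprn_gt0.
rewrite /term RdivE !RpowE INRE INRE.
apply: le_trans (_ : Rpower l%:R (1 + eps) / (nu l)%:R ^+ 2 * Pr ^+ 2 <= _).
  apply: ler_wpM2l.
    by rewrite divr_ge0 // ?exprn_ge0 // ?ltW // Rpower_gt0.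
  by apply: lerXn2r; rewrite ?nnegrE // (le_trans Sc0).
rewrite rr_prod //.
have key : Rpower l%:R (1 + eps) <= Rpower Y (- s) * Rpower l%:R (1 + eps + s).
  rewrite (Rpower_plus (1 + eps) s) RmultE mulrCA.
  rewrite -[leLHS]mulr1 ler_wpM2l //; first exact: ltW (Rpower_gt0 _ _).
  have e1 : Rpower Y (- s) * Rpower Y s = 1.
    by rewrite -RmultE -Rpower_plus Rplus_opp_l Rpower_O //; apply/RltP.
  rewrite -[leLHS]e1 ler_wpM2l //; first exact: ltW (Rpower_gt0 _ _).
  apply/RleP; apply: Rle_Rpower_l; first by apply/RleP.
  by split; [apply/RltP | apply/RleP; exact: ltW].
rewrite !mulrA -[X in _ <= X]mulrA -[X in X <= _]mulrA.
have Pr0 : 0 <= Pr by rewrite /Pr; apply: prodr_ge0 => p _; apply: exprn_ge0; apply/RleP; rewrite -R0E; lra.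
apply: ler_wpM2r; first exact: mulr_ge0.
apply: ler_wpM2r; first by rewrite invr_ge0 exprn_ge0 // ltW.
exact: key.
Qed.

Open Scope R_scope.

Lemma exp_le x y : x <= y -> exp x <= exp y.
Proof. move=> h; case: (Rle_lt_or_eq_dec _ _ h) => [h'|->]; [left; exact: exp_increasing | right=> //]. Qed.

Lemma ln_le x y : 0 < x -> x <= y -> ln x <= ln y.
Proof. move=> h0 h; case: (Rle_lt_or_eq_dec _ _ h) => [h'|->]; [left; exact: ln_increasing | right=> //]. Qed.

Lemma ln2_pos : 0 < ln 2.
Proof. rewrite -ln_1; apply: ln_increasing; lra. Qed.

Lemma ln32 : 2 * ln (3/2) = ln (9/4).
Proof. rewrite (_ : 9/4 = 3/2 * (3/2)); last field. rewrite ln_mult; lra. Qed.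

Lemma g2_eq : 2 * gamma0 = 2 * ln (3/2) / ln 2 - 1.
Proof. have := ln2_pos; rewrite /gamma0 => h; field; lra. Qed.

Lemma g2_pos : 0 < 2 * gamma0.
Proof.
rewrite g2_eq ln32; have h := ln2_pos.
have : ln 2 < ln (9/4) by apply: ln_increasing; lra.
move=> h2; apply: (Rmult_lt_reg_r (ln 2)) => //.
rewrite Rmult_0_l Rmult_minus_distr_r /Rdiv Rmult_assoc Rinv_l; lra.
Qed.

Lemma g2_le : 2 * gamma0 <= 1/4.
Proof.
rewrite g2_eq; have h := ln2_pos.
have : 8 * ln (3/2) <= 5 * ln 2.
  have e1 : ln ((3/2)^8) = 8 * ln (3/2) by rewrite ln_pow; [simpl; lra | lra].
  have e2 : ln (2^5) = 5 * ln 2 by rewrite ln_pow; [simpl; lra | lra].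
  rewrite -e1 -e2; apply: ln_le; simpl; lra.
move=> h2; apply: (Rmult_le_reg_r (ln 2)) => //.
rewrite Rmult_minus_distr_r /Rdiv Rmult_assoc Rinv_l; lra.
Qed.

Lemma Rpow2g2 : Rpower 2 (2 * gamma0) = 9/8.
Proof.
have h := ln2_pos.
rewrite /Rpower g2_eq.
have -> : (2 * ln (3/2) / ln 2 - 1) * ln 2 = ln (3/2) + ln (3/2) + - ln 2 by field; lra.
rewrite !exp_plus exp_Ropp !exp_ln; lra.
Qed.

Lemma rp_bound (p y : R) : 1 <= p -> 0 < y -> p <= y ^ 4 -> Rpower p (2 * gamma0) <= y.
Proof.
move=> p1 y0 py.
have lp : 0 <= ln p by rewrite -ln_1; apply: ln_le; lra.
rewrite /Rpower -[X in _ <= X](exp_ln y) //; apply: exp_le.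
have : ln p <= 4 * ln y.
  have -> : 4 * ln y = ln (y ^ 4) by rewrite ln_pow //; simpl; lra.
  apply: ln_le; lra.
have := g2_le; have := g2_pos; nra.
Qed.

Lemma key_bound (p : nat) : (2 <= p)%N ->
  4 * INR p * Rpower (INR p) (2 * gamma0) <= (INR p + 1) ^ 2.
Proof.
move=> p2.
have : (p = 2 \/ p = 3 \/ p = 4 \/ p = 5 \/ p = 6 \/ 7 <= p)%N by lia.
case=> [->|[->|[->|[->|[->|p7]]]]].
- rewrite Rpow2g2; simpl; lra.
- have h : Rpower (INR 3) (2 * gamma0) <= 4/3 by apply: rp_bound; simpl; lra.
  simpl in h |- *; lra.
- have h : Rpower (INR 4) (2 * gamma0) <= 25/16 by apply: rp_bound; simpl; lra.
  simpl in h |- *; lra.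
- have h : Rpower (INR 5) (2 * gamma0) <= 36/20 by apply: rp_bound; simpl; lra.
  simpl in h |- *; lra.
- have h : Rpower (INR 6) (2 * gamma0) <= 49/24 by apply: rp_bound; simpl; lra.
  simpl in h |- *; lra.
have hp : 7 <= INR p by rewrite (_ : 7 = INR 7); [apply: le_INR; lia | simpl; lra].
have h : Rpower (INR p) (2 * gamma0) <= INR p / 4.
  apply: rp_bound; try lra.
  have : 343 <= INR p ^ 3 by rewrite (_ : 343 = 7 ^ 3); [apply: pow_incr; lra | simpl; lra].
  simpl; nra.
have : 0 <= INR p by lra.
nra.
Qed.

Lemma key_bound16 (p : nat) : (16 <= p)%N ->
  8 * INR p * Rpower (INR p) (2 * gamma0) <= (INR p + 1) ^ 2.
Proof.
move=> p16.
have hp : 16 <= INR p by rewrite (_ : 16 = INR 16); [apply: le_INR; lia | simpl; lra].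
have h : Rpower (INR p) (2 * gamma0) <= INR p / 8.
  apply: rp_bound; try lra.
  have : 4096 <= INR p ^ 3 by rewrite (_ : 4096 = 16 ^ 3); [apply: pow_incr; lra | simpl; lra].
  simpl; nra.
have : 0 <= INR p by lra.
nra.
Qed.

Open Scope R_scope.
Definition aexp eps := 1 + 2 * gamma0 - eps.
Lemma rr_std (p : nat) eps : 0 < eps -> (2 <= p)%N ->
  let b := Rpower (INR p) (aexp eps) * 2 ^ 2 / (INR p.+1) ^ 2 in
  0 <= b /\ b <= Rpower 2 (- eps) /\ ((16 <= p)%N -> b <= / 2).
Proof.
move=> e0 p2 b.
have P2 : 2 <= INR p by rewrite (_ : 2 = INR 2); [apply: le_INR; lia | simpl; lra].
have hA : 0 < Rpower (INR p) (2 * gamma0) by apply/RltP; exact: Rpower_gt0.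
have hB : 0 < Rpower (INR p) (- eps) by apply/RltP; exact: Rpower_gt0.
have hBr : Rpower (INR p) (- eps) <= Rpower 2 (- eps).
  rewrite !Rpower_Ropp; apply: Rinv_le_contravar.
    by apply/RltP; exact: Rpower_gt0.
  apply: Rle_Rpower_l; lra.
have hB1 : Rpower (INR p) (- eps) <= 1.
  rewrite -(Rpower_O (INR p)); last lra.
  apply: Rle_Rpower; lra.
have eb : b = 4 * INR p * Rpower (INR p) (2 * gamma0) * Rpower (INR p) (- eps) * / (INR p + 1) ^ 2.
  rewrite /b /aexp (_ : 1 + 2 * gamma0 - eps = 1 + 2 * gamma0 + - eps); last ring.
  rewrite !Rpower_plus Rpower_1 ?S_INR /Rdiv; [simpl; ring | lra].
set A := Rpower (INR p) (2 * gamma0) in hA eb.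
set B := Rpower (INR p) (- eps) in hB hBr hB1 eb.
set D := (INR p + 1) ^ 2 in eb.
have hD : 0 < D by rewrite /D; simpl; nra.
have hI : 0 < / D by apply: Rinv_0_lt_compat.
have DI : D * / D = 1 by field; lra.
have kb := @key_bound p p2; rewrite -/A -/D in kb.
have e1 : D * / D * B = B by rewrite DI; ring.
have pos : 0 <= (D - 4 * INR p * A) * (B * / D) by apply: Rmult_le_pos; nra.
split; first by rewrite eb; apply: Rmult_le_pos; [apply: Rmult_le_pos|]; nra.
split; first by nra.
move=> p16; have kb2 := @key_bound16 p p16; rewrite -/A -/D in kb2.
have pos2 : 0 <= (D - 8 * INR p * A) * (B * / D) by apply: Rmult_le_pos; nra.
have pos3 : 0 <= (1 - B) * (4 * INR p * A * / D).
  apply: Rmult_le_pos; first lra.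
  apply: Rmult_le_pos; nra.
have e2 : D * / D * (4 * INR p * A) = 4 * INR p * A by rewrite DI; ring.
nra.
Qed.

Open Scope ring_scope.

Lemma rr_ring (p : nat) (eps : R) : 0 < eps -> (2 <= p)%N ->
  [/\ 0 <= rr (aexp eps) p, rr (aexp eps) p <= Rpower 2 (- eps)
    & (16 <= p)%N -> rr (aexp eps) p <= 2^-1].
Proof.
move=> /RltP e0 p2; have := @rr_std p eps e0 p2.
rewrite /rr -!INRE -!RpowE => /= [[h1 [h2 h3]]].
split; [exact/RleP | exact/RleP | move=> /h3 h; exact/RleP].
Qed.

Lemma geom (x c : R) K : 0 <= x -> x <= c -> c < 1 ->
  \sum_(e < K) x ^+ e <= (1 - c)^-1.
Proof.
move=> x0 xc c1.
have c0 : 0 < 1 - c by rewrite subr_gt0.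
have x1 : 0 < 1 - x by rewrite subr_gt0; apply: le_lt_trans c1.
have e : (1 - x) * \sum_(e < K) x ^+ e = 1 - x ^+ K.
  by have h := subrX1 x K; rewrite -[1 - x]opprB mulNr -h opprB.
rewrite -[leRHS]div1r ler_pdivlMr //.
apply: le_trans (_ : (\sum_(e < K) x ^+ e) * (1 - x) <= _).
  apply: ler_wpM2l; first by apply: sumr_ge0 => i _; exact: exprn_ge0.
  by rewrite lerD2l lerN2.
rewrite mulrC e lerBlDr lerDl; exact: exprn_ge0.
Qed.

Open Scope nat_scope.

Lemma prod_pos r (G : 'I_r -> nat) : (forall i, 0 < G i) -> 0 < \prod_(i < r) G i.
Proof. by move=> G0; elim/big_ind: _ => // x y; rewrite muln_gt0 => ->. Qed.

Lemma logn_prod_ord r p (G : 'I_r -> nat) : (forall i, 0 < G i) ->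
  logn p (\prod_(i < r) G i) = \sum_(i < r) logn p (G i).
Proof.
move=> G0.
apply: (big_rec2 (fun a b => (0 < b) -> logn p b = a)) => //.
  by move=> _; rewrite logn1.
move=> i a b _ IH b0.
have bb : 0 < b by move: b0; rewrite muln_gt0 => /andP [].
by rewrite lognM ?G0 // IH.
exact: prod_pos.
Qed.


Lemma tau_bound L : 0 < L -> 2 ^ size (primes L) <= tau L.
Proof.
move=> L0; set r := size (primes L).
pose Pi (i : 'I_r) := nth 0 (primes L) i.
have PiP i : Pi i \in primes L by rewrite mem_nth.
have Pipr i : prime (Pi i) by have := PiP i; rewrite mem_primes => /andP [].
pose F (f : {ffun 'I_r -> bool}) := \prod_(i < r) Pi i ^ f i.
have Fpos f : 0 < F f by apply: prod_pos => i; rewrite expn_gt0 prime_gt0.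
have logF f i : logn (Pi i) (F f) = f i.
  rewrite logn_prod_ord; last by move=> j; rewrite expn_gt0 prime_gt0.
  rewrite (bigD1 i) //= big1 ?addn0.
    by rewrite lognX logn_prime // eqxx muln1.
  move=> j ji; rewrite lognX logn_prime // nth_uniq ?primes_uniq //.
  case: eqP => [/val_inj ij|_]; last by rewrite muln0.
  by rewrite ij eqxx in ji.
have Finj : injective F.
  move=> f g e; apply/ffunP => i; have := logF g i; rewrite -e logF.
  by case: (f i); case: (g i).
have := @uniq_leq_size _ [seq F f | f <- enum {ffun 'I_r -> bool}] (divisors L).
rewrite size_map -cardE card_ffun card_bool card_ord /tau; apply.
  by rewrite map_inj_uniq // enum_uniq.
move=> d /mapP [f _ ->]; rewrite -dvdn_divisors //.
rewrite [X in _ %| X](@nat_decomp L L0) (big_nth 0) big_mkord /F.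
elim/big_ind2: _ => // [x1 x2 y1 y2 h1 h2|i _]; first exact: dvdn_mul.
apply: dvdn_exp2l; have := PiP i; rewrite -logn_gt0.
by case: (f i).
Qed.

Local Open Scope ring_scope.

Lemma prod_ext (l : nat) (P : seq nat) (F : nat -> nat -> R) :
  uniq P -> {subset primes l <= P} -> (forall p, F p 0%N = 1) ->
  \prod_(p <- primes l) F p (logn p l) = \prod_(p <- P) F p (logn p l).
Proof.
move=> uP sub F0; symmetry.
rewrite (bigID (fun p => p \in primes l)) /= [X in _ * X]big1 ?mulr1; last first.
  move=> p pl; rewrite (_ : logn p l = 0%N) //.
  by apply/eqP; rewrite -leqn0 leqNgt logn_gt0.
rewrite -big_filter; apply: perm_big; apply: uniq_perm.
- by rewrite ?primes_uniq ?filter_uniq.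
- by rewrite ?primes_uniq ?filter_uniq.
by move=> p; rewrite mem_filter; case pl: (p \in primes l) => //=; rewrite sub.
Qed.

Lemma prod_const (x : R) (P : seq nat) : \prod_(p <- P) x = x ^+ size P.
Proof. by elim: P => [|q P IH]; rewrite ?big_nil ?big_cons ?IH ?exprS. Qed.

Lemma prod_if (B : R) (P : seq nat) : 1 <= B -> uniq P ->
  \prod_(p <- P) (if (p < 16)%N then B else 1) <= B ^+ 16.
Proof.
move=> B1 uP.
have -> : \prod_(p <- P) (if (p < 16)%N then B else 1) = B ^+ count (fun p => p < 16)%N P.
  elim: P uP => [|q P IH] /=; first by rewrite big_nil.
  move=> /andP [_ uP]; rewrite big_cons IH //.
  by case: (q < 16)%N; rewrite ?exprS ?mul1r.
have hc : (count (fun p => p < 16)%N P <= 16)%N.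
  rewrite -size_filter.
  have := @uniq_leq_size _ [seq p <- P | (p < 16)%N] (iota 0 16).
  rewrite size_iota; apply; first exact: filter_uniq.
  by move=> p; rewrite mem_filter mem_iota => /andP [].
set c := count _ P in hc *.
have -> : B ^+ 16 = B ^+ c * B ^+ (16 - c) by rewrite -exprD subnKC.
apply: ler_peMr; last exact: exprn_ege1.
by apply: exprn_ge0; apply: le_trans B1.
Qed.

Lemma rr_ge0 b p : 0 <= rr b p.
Proof.
rewrite /rr; apply: mulr_ge0; last by rewrite invr_ge0 exprn_ge0.
apply: mulr_ge0; first exact: ltW (Rpower_gt0 _ _).
by apply: exprn_ge0; exact: ler0n.
Qed.

Open Scope R_scope.
Lemma c2_std : / (1 - / 2) = 2.
Proof. field. Qed.
Lemma nat2 : INR 2 = 2.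
Proof. simpl; lra. Qed.

Open Scope R_scope.

Theorem corollary6p4 :
  exists eps0 : R, 0 < eps0 /\
    forall eps : R, 0 < eps < eps0 ->
      exists C : R, 0 < C /\
        forall (L : nat) (Y : R), (0 < L)%nat -> 1 <= Y ->
          forall N : nat,
            partial_sum eps L Y N
              <= C * Rpower Y (- 2 * gamma0 + 2 * eps) * INR (tau L).
Proof.
exists gamma0; split; first by have := g2_pos; lra.
move=> eps [e0 e1].
pose rho := Rpower 2 (- eps).
have rho1 : rho < 1.
  rewrite /rho -(Rpower_O 2); last lra.
  apply: Rpower_lt; lra.
have rho0 : 0 < rho by apply/RltP; exact: Rpower_gt0.
pose B := / (1 - rho).
have B1 : 1 <= B by rewrite /B -Rinv_1; apply: Rinv_le_contravar; lra.
exists (B ^ 16); split; first by apply: pow_lt; lra.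
move=> L Y L0 Y1 N.
pose s := 2 * gamma0 - 2 * eps.
have s0 : 0 <= s by rewrite /s; lra.
have -> : Rpower Y (- 2 * gamma0 + 2 * eps) = Rpower Y (- s) by rewrite /s; f_equal; ring.
have aE : 1 + eps + s = aexp eps by rewrite /s /aexp; ring.
have Y1' : (1 <= Y)%R by apply/RleP.
have s0' : (0 <= s)%R by apply/RleP.
have c2E : ((1 - 2^-1)^-1 : R)%R = 2 := c2_std.
apply/RleP; rewrite RpowE INRE /partial_sum sum_f_R0E.
set P := primes L.
pose G (l : nat) := (\prod_(p <- P) rr (aexp eps) p ^+ logn p l)%R.
pose pr (l : nat) := divides_pow_inf l L && (Y < l%:R)%R.
have G0 l : (0 <= G l)%R by apply: prodr_ge0 => p _; apply: exprn_ge0; exact: rr_ge0.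
apply: le_trans (_ : (\sum_(0 <= l < N.+1) (if pr l then Rpower Y (- s) * G l else 0) <= _)%R).
  apply: ler_sum => l _.
  have rhs0 : (0 <= if pr l then Rpower Y (- s) * G l else 0)%R.
    by case: ifP => // _; apply: mulr_ge0 => //; exact: ltW (Rpower_gt0 _ _).
  case hd: (divides_pow_inf l L) => //=.
  case: Rlt_dec => [hl|hl] //=.
  have Yl : (Y < l%:R)%R by rewrite -INRE; apply/RltP.
  have l0 : (0 < l)%N by move: hd => /andP [].
  rewrite /pr hd Yl /=.
  apply: le_trans (@term_bound eps s Y l s0' Y1' l0 Yl) _.
  rewrite le_eqVlt; apply/orP; left; apply/eqP; congr (_ * _).
  rewrite /G -(@prod_ext l P (fun p e => rr (aexp eps) p ^+ e)) //.
  - by apply: eq_bigr => p _; congr (rr _ _ ^+ _); exact: aE.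
  - exact: primes_uniq.
  move=> p; rewrite /P !mem_primes => /and3P [pp _ pl].
  rewrite pp L0 /=; move: hd => /andP [_ /allP]; apply.
  by rewrite mem_primes pp l0.
rewrite -big_mkcond /= -mulr_sumr -big_filter.
set S := [seq l <- index_iota 0 N.+1 | pr l].
have Ys0 : (0 <= Rpower Y (- s))%R by exact: ltW (Rpower_gt0 _ _).
have e0' : (0 < eps)%R by apply/RltP.
have rho1' : (rho < 1)%R by apply/RltP.
have B1' : (1 <= B)%R by apply/RleP.
have hS : forall l, l \in S -> [/\ (0 < l)%N, {subset primes l <= P} & forall p, (logn p l <= N)%N].
  move=> l; rewrite mem_filter mem_index_iota => /andP [/andP [hd _] /andP [_ lN]].
  have l0 : (0 < l)%N by move: hd => /andP [].
  split => //.
    move=> p; rewrite /P !mem_primes => /and3P [pp _ pl].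
    rewrite pp L0 /=; move: hd => /andP [_ /allP]; apply.
    by rewrite mem_primes pp l0.
  by move=> p; apply: leq_trans (@logn_le p l l0) _; rewrite -ltnS.
have hinj := @inj_bound P S N (fun p e => rr (aexp eps) p ^+ e)%R
  (filter_uniq _ (iota_uniq _ _)) hS (fun p e => exprn_ge0 _ (rr_ge0 _ _)).
have loc : (\prod_(p <- P) \sum_(e < N.+1) rr (aexp eps) p ^+ e
    <= \prod_(p <- P) ((2 : R) * (if (p < 16)%N then B else 1)))%R.
  rewrite big_seq [X in (_ <= X)%R]big_seq; apply: ler_prod => p pP.
  have p2 : (2 <= p)%N by apply: prime_gt1; move: pP; rewrite mem_primes => /andP [].
  have [r0 r1 r2] := @rr_ring p eps e0' p2.
  rewrite sumr_ge0 /=; last by move=> e _; exact: exprn_ge0.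
  case: ifP => p16.
    apply: le_trans (geom _ _ _ r0 r1 rho1') _.
    rewrite -[X in (X <= _)%R]mul1r; apply: ler_wpM2r.
      exact: le_trans ler01 B1'.
    by apply/RleP; rewrite -R1E; lra.
  have h2 : ((2 : R)^-1 < 1)%R by apply/RltP; rewrite -R1E -RinvE; lra.
  apply: le_trans (geom _ _ _ r0 (r2 _) h2) _; first by rewrite leqNgt p16.
  by rewrite c2E mulr1.
have tb : ((2 : R) ^+ size P <= (tau L)%:R)%R.
  by rewrite -nat2 INRE -natrX ler_nat; apply: tau_bound.
have B0 : (0 <= B)%R by apply/RleP; rewrite -R0E; lra.
apply: le_trans (ler_wpM2l Ys0 (le_trans hinj loc)) _.
rewrite big_split /= prod_const.
apply: le_trans (_ : (Rpower Y (- s) * ((tau L)%:R * B ^+ 16) <= _)%R); last first.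
  by apply/RleP; right; rewrite -!RmultE; ring.
apply: ler_wpM2l => //.
apply: le_trans (_ : ((2 : R) ^+ size P * B ^+ 16 <= _)%R).
  apply: ler_wpM2l; first by apply: exprn_ge0; apply/RleP; rewrite -R0E; lra.
  exact: prod_if B1' (primes_uniq L).
apply: ler_wpM2r => //; exact: exprn_ge0.
Qed.
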